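(* Let $f$ be a probability density supported on $\mathbb{R}_+=[0,\infty)$ that is càdlàg (right-continuous with left limits at every point). Let $\mathcal{M}$ be the class of non-increasing probability densities on $\mathbb{R}_+$ and define $$\pi_0:=\sup\big\{\pi:\exists g\in\mathcal{M}\text{ such that } f-\pi g\ge 0\text{ a.e.}\big\}.$$ Then $$\pi_0=\int_0^\infty h_0(x)\,dx,\qquad h_0(x):=\operatorname{ess\,inf}\{f(y): y\le x\}.$$ Moreover, if $\pi_0>0$, the supremum is attained by the density $g_0:=h_0/\pi_0$ and by no other density in $\mathcal{M}$ (densities identified up to a.e. equality).
   Context: For a function $f$ and $x\ge 0$, $\operatorname{ess\,inf}\{f(y):y\le x\}$ denotes the essential infimum of $f$ over $[0,x]$ with respect to Lebesgue measure, i.e. the supremum of $t$ such that $\{y\in[0,x]: f(y)<t\}$ has Lebesgue measure zero. Densities are understood up to Lebesgue-null sets. *)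

(* Defs.v *)
From HB Require Import structures.
From mathcomp Require Import all_boot all_order all_algebra.
From mathcomp Require Import all_classical all_reals all_analysis.
Set Implicit Arguments. Unset Strict Implicit. Unset Printing Implicit Defensive.
Import Order.TTheory GRing.Theory Num.Theory.
Import numFieldNormedType.Exports.
Local Open Scope classical_set_scope.
Local Open Scope ring_scope.

(* f is a probability density on R_+ = [0, +oo[ (only its values on R_+ matter). *)
Definition prob_density_Rplus (R : realType) (f : R -> R) : Prop :=
  measurable_fun (`[0%R, +oo[ : set R) f /\
  (forall x : R, 0 <= x -> 0 <= f x) /\
  ((\int[@lebesgue_measure R]_(x in `[0%R, +oo[) (f x)%:E)%E = 1%E).

Definition cadlag_Rplus (R : realType) (f : R -> R) : Prop :=
  (forall x : R, 0 <= x -> f @ x^'+ --> f x) /\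
  (forall x : R, 0 < x -> cvg (f @ x^'-)).

(* the class M of non-increasing probability densities on R_+
   (monotonicity required on ]0,+oo[, densities being defined up to null sets) *)
Definition nonincr_density (R : realType) (g : R -> R) : Prop :=
  prob_density_Rplus g /\
  (forall x y : R, 0 < x -> x <= y -> g y <= g x).

Definition dominated_ae (R : realType) (f g : R -> R) (p : R) : Prop :=
  {ae @lebesgue_measure R, forall x : R, 0 <= x -> 0 <= f x - p * g x}.

Definition pi0 (R : realType) (f : R -> R) : R :=
  sup [set p : R | exists g : R -> R, nonincr_density g /\ dominated_ae f g p].

(* h_0(x) = ess inf { f(y) : 0 <= y <= x } w.r.t. Lebesgue measure:
   the supremum of t such that { y in [0,x] : f y < t } is Lebesgue-null.
   Extended-real valued (it is +oo when [0,x] is null, i.e. x <= 0). *)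
Definition h0 (R : realType) (f : R -> R) (x : R) : \bar R :=
  ereal_sup [set t%:E | t in
    [set t : R | @lebesgue_measure R [set y : R | 0 <= y <= x /\ f y < t] = 0%E]].

(* g_0 = h_0 / pi_0 (real-valued; h_0 is finite on ]0,+oo[ ) *)
Definition g0 (R : realType) (f : R -> R) (x : R) : R :=
  fine (h0 f x) / pi0 f.

(* Main.v *)
Require Import Defs.
From HB Require Import structures.
From mathcomp Require Import all_boot all_order all_algebra.
From mathcomp Require Import all_classical all_reals all_analysis.
From mathcomp Require Import measurable_realfun.
Import Order.TTheory GRing.Theory Num.Theory.
Local Open Scope classical_set_scope.
Local Open Scope ring_scope.
Set Implicit Arguments. Unset Strict Implicit. Unset Printing Implicit Defensive.

Definition Sset (R : realType) (f : R -> R) (x t : R) : set R :=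
  [set y | 0 <= y <= x /\ f y < t].
Definition Pz (R : realType) (f : R -> R) (x t : R) : Prop :=
  @lebesgue_measure R (Sset f x t) = 0%E.

Lemma Sset_meas (R : realType) (f : R -> R) x t :
  prob_density_Rplus f -> measurable (Sset f x t).
Proof.
move=> [mf _].
have := mf (measurable_itv _) _ (measurable_itv `]-oo, t[).
move=> /(measurableI `[0, x]%classic) -/(_ (measurable_itv _)).
congr measurable; apply/seteqP; split => y /=.
  rewrite !in_itv/= andbT => -[/andP[y0 yx] [_ ft]]; split => //.
  by rewrite y0.
rewrite /Sset/= => -[/andP[y0 yx] ft]; rewrite !in_itv/= y0 yx ft; split => //.
Qed.

Lemma Pz_le_x (R : realType) (f : R -> R) z x t :
  prob_density_Rplus f -> z <= x -> Pz f x t -> Pz f z t.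
Proof.
move=> pd zx; apply: subset_measure0; try exact: Sset_meas pd.
move=> y [/andP[y0 yz] ft]; split => //; rewrite y0 (le_trans yz zx).
done.
Qed.

Lemma Pz_le_t (R : realType) (f : R -> R) x t' t :
  prob_density_Rplus f -> t' <= t -> Pz f x t -> Pz f x t'.
Proof.
move=> pd tt; apply: subset_measure0; try exact: Sset_meas pd.
by move=> y [yx ft]; split => //; exact: lt_le_trans ft tt.
Qed.

Lemma Pz_nonpos (R : realType) (f : R -> R) x t :
  prob_density_Rplus f -> t <= 0 -> Pz f x t.
Proof.
move=> [_ [f0 _]] t0; rewrite /Pz (_ : Sset f x t = set0) ?measure0//.
apply/seteqP; split => // y [/andP[y0 _] ft].
by have := f0 _ y0; rewrite leNgt (lt_le_trans ft t0).
Qed.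

Lemma Pz_0 (R : realType) (f : R -> R) t :
  prob_density_Rplus f -> Pz f 0 t.
Proof.
move=> pd; rewrite /Pz; apply: subset_measure0.
- exact: Sset_meas pd.
- exact: (measurable_set1 (0:R)).
- by move=> y [/andP[y0 y0'] _]; apply/eqP; rewrite eq_le y0 y0'.
- exact: lebesgue_measure_set1.
Qed.

Lemma Pz_le_h0 (R : realType) (f : R -> R) x t :
  Pz f x t -> (t%:E <= h0 f x)%E.
Proof. by move=> P; apply: ereal_sup_ubound; exists t. Qed.

Lemma h0_ge0 (R : realType) (f : R -> R) x :
  prob_density_Rplus f -> (0 <= h0 f x)%E.
Proof. by move=> pd; apply: Pz_le_h0; exact: Pz_nonpos. Qed.

Lemma h0_gt_Pz (R : realType) (f : R -> R) x q :
  prob_density_Rplus f -> (q%:E < h0 f x)%E -> Pz f x q.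
Proof.
move=> pd /ereal_sup_gt[_ [t Pt <-]]; rewrite lte_fin => qt.
exact: Pz_le_t (ltW qt) Pt.
Qed.

Lemma h0_mono (R : realType) (f : R -> R) x y :
  prob_density_Rplus f -> x <= y -> (h0 f y <= h0 f x)%E.
Proof.
move=> pd xy; apply: ge_ereal_sup => _ [t Pt <-].
by apply: Pz_le_h0; exact: Pz_le_x xy Pt.
Qed.

Lemma Pz_bound (R : realType) (f : R -> R) x :
  prob_density_Rplus f -> 0 < x -> exists M, forall t, Pz f x t -> t <= M.
Proof.
move=> pd x0; apply: contrapT => H.
have Pn (n : nat) : Pz f x n%:R.
  apply: contrapT => nP; apply: H; exists n%:R => t Pt; rewrite leNgt.
  by apply/negP => nt; apply: nP; exact: Pz_le_t (ltW nt) Pt.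
have sub : `[0, x]%classic `<=` \bigcup_n Sset f x n%:R.
  move=> y /=; rewrite in_itv/= => /andP[y0 yx].
  exists (Num.truncn (f y)).+1 => //; split; first by rewrite y0.
  exact: truncnS_gt.
have : (@lebesgue_measure R).-negligible `[0, x]%classic.
  apply: (@negligibleS _ _ _ (@lebesgue_measure R) _ _ sub); apply: negligible_bigcup => n.
  exists (Sset f x n%:R); split => //. have h := @Sset_meas R f x n%:R pd. exact: h. exact: Pn.
move=> /negligibleP -/(_ (measurable_itv _)) h.
have := eq_trans (esym h) (lebesgue_measure_itv `[0, x]).
rewrite /= lte_fin x0 -EFinD subr0 => -[] /eqP.
by rewrite eq_sym gt_eqF.
Qed.

Definition kf (R : realType) (f : R -> R) (x : R) : R := fine (h0 f x).

Lemma h0_fin (R : realType) (f : R -> R) x :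
  prob_density_Rplus f -> 0 < x -> h0 f x = (kf f x)%:E.
Proof.
move=> pd x0; have [M HM] := Pz_bound pd x0.
rewrite /kf fineK// ge0_fin_numE ?h0_ge0//.
apply: (@le_lt_trans _ _ M%:E); last exact: ltry.
by apply: ge_ereal_sup => _ [t Pt <-]; rewrite lee_fin; exact: HM.
Qed.

Lemma kf_ge0 (R : realType) (f : R -> R) x :
  prob_density_Rplus f -> 0 <= kf f x.
Proof. by move=> pd; apply: fine_ge0; exact: h0_ge0. Qed.

Lemma kf_mono (R : realType) (f : R -> R) x y :
  prob_density_Rplus f -> 0 < x -> x <= y -> kf f y <= kf f x.
Proof.
move=> pd x0 xy; have y0 := lt_le_trans x0 xy.
by rewrite -lee_fin -!h0_fin//; exact: h0_mono.
Qed.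

Lemma kf_gt_Pz (R : realType) (f : R -> R) x q :
  prob_density_Rplus f -> 0 < x -> q < kf f x -> Pz f x q.
Proof.
by move=> pd x0 qk; apply: h0_gt_Pz => //; rewrite h0_fin// lte_fin.
Qed.

Lemma Pz_le_kf (R : realType) (f : R -> R) x t :
  prob_density_Rplus f -> 0 < x -> Pz f x t -> t <= kf f x.
Proof.
by move=> pd x0 Pt; rewrite -lee_fin -h0_fin//; exact: Pz_le_h0.
Qed.

Lemma kf_meas_o (R : realType) (f : R -> R) :
  prob_density_Rplus f -> measurable_fun (`]0, +oo[%classic : set R) (kf f).
Proof.
move=> pd.
pose phi := fun u : R => kf f (expR u).
have mphi : measurable_fun setT phi.
  apply: nonincreasing_measurable => // u v uv.
  by apply: kf_mono => //; [exact: expR_gt0| rewrite ler_expR].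
have : measurable_fun (`]0, +oo[%classic : set R) (phi \o (@ln R)).
  apply: measurableT_comp => //. have := @measurable_ln R. exact: measurable_funS. 
apply: eq_measurable_fun => x; rewrite inE/= in_itv/= andbT => x0.
by rewrite /phi/= lnK// posrE.
Qed.

Lemma kf_meas (R : realType) (f : R -> R) :
  prob_density_Rplus f -> measurable_fun (`[0, +oo[%classic : set R) (kf f).
Proof.
move=> pd.
have -> : (`[0, +oo[%classic : set R) = [set (0:R)] `|` (`]0, +oo[%classic : set R).
  apply/seteqP; split => x /=; rewrite !in_itv/= !andbT.
    by rewrite le_eqVlt => /orP[/eqP ->|]; [left|right].
  by case=> [->//|/ltW].
apply/measurable_funU => //; split; first exact: measurable_fun_set1.
exact: kf_meas_o.
Qed.

Lemma negl_rat (R : realType) (G : rat -> set R) :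
  (forall r, (@lebesgue_measure R).-negligible (G r)) ->
  (@lebesgue_measure R).-negligible [set x | exists r, G r x].
Proof.
move=> HG.
pose H := fun n : nat => match @unpickle rat n with Some r => G r | None => set0 end.
have sub : [set x | exists r, G r x] `<=` \bigcup_n H n.
  move=> x [r Gx]; exists (pickle r); first exact: I.
  by rewrite /H pickleK; exact: Gx.
apply: (@negligibleS _ _ _ (@lebesgue_measure R) _ _ sub).
apply: negligible_bigcup => n; rewrite /H; case: (unpickle n) => [r|].
  exact: HG.
exact: negligible_set0.
Qed.

Lemma negl_set1 (R : realType) (x0 : R) :
  (@lebesgue_measure R).-negligible [set x0].
Proof.
exists [set x0]; split; [exact: measurable_set1| exact: lebesgue_measure_set1| by []].
Qed.

Lemma negl_E (R : realType) (f : R -> R) q :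
  prob_density_Rplus f ->
  (@lebesgue_measure R).-negligible [set x | 0 < x /\ Pz f x q /\ f x < q].
Proof.
move=> pd.
pose F := fun r : rat => [set y | Pz f (ratr r) q /\ 0 <= y <= ratr r /\ f y < q].
pose M := [set x | 0 < x /\ Pz f x q /\ forall x', x < x' -> ~ Pz f x' q].
have sub : [set x | 0 < x /\ Pz f x q /\ f x < q] `<=`
   [set x | exists r, F r x] `|` M.
  move=> x [x0 [Px fx]].
  have [[x' xx' Px']|] := pselect (exists2 x', x < x' & Pz f x' q); last first.
    by move=> nH; right; split => //; split => // x' xx' Px'; apply: nH; exists x'.
  left; have /rat_in_itvoo[r] := xx'; rewrite in_itv/= => /andP[xr rx'].
  exists r; split; first exact: Pz_le_x (ltW rx') Px'.
  by rewrite (ltW x0) (ltW xr).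
apply: (@negligibleS _ _ _ (@lebesgue_measure R) _ _ sub).
apply: negligibleU.
  apply: negl_rat => r; rewrite /F.
  have [Pr|nPr] := pselect (Pz f (ratr r) q).
    exists (Sset f (ratr r) q); split => //; first exact: Sset_meas pd.
    by move=> y [_ [yr fy]].
  have -> : [set y | Pz f (ratr r) q /\ 0 <= y <= ratr r /\ f y < q] = set0.
    by apply/seteqP; split => // y [].
  exact: negligible_set0.
have [[x0 Mx0]|nM] := pselect (exists x0, M x0); last first.
  have -> : M = set0 by apply/seteqP; split => // x Mx; apply: nM; exists x.
  exact: negligible_set0.
apply: (@negligibleS _ _ _ (@lebesgue_measure R) [set x0]); last exact: negl_set1.
move=> x1 Mx1; apply/eqP; rewrite eq_le; apply/andP; split; rewrite leNgt; apply/negP.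
  by move=> h; case: Mx0 => _ [_ H]; apply: (H _ h); case: Mx1 => _ [].
by move=> h; case: Mx1 => _ [_ H]; apply: (H _ h); case: Mx0 => _ [].
Qed.

Lemma kf_le_f (R : realType) (f : R -> R) :
  prob_density_Rplus f ->
  (@lebesgue_measure R).-negligible [set x | 0 < x /\ f x < kf f x].
Proof.
move=> pd.
have sub : [set x | 0 < x /\ f x < kf f x] `<=`
   [set x | exists q : rat, [set x | 0 < x /\ Pz f x (ratr q) /\ f x < ratr q] x].
  move=> x [x0 fx]; have /rat_in_itvoo[q] := fx.
  rewrite in_itv/= => /andP[fq qk]; exists q; split => //; split => //.
  exact: kf_gt_Pz.
apply: (@negligibleS _ _ _ (@lebesgue_measure R) _ _ sub).
by apply: negl_rat => q; exact: negl_E.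
Qed.

Lemma ae_from (R : realType) (N : set R) (Q : R -> Prop) :
  (@lebesgue_measure R).-negligible N -> (forall x, ~ N x -> Q x) ->
  {ae @lebesgue_measure R, forall x, Q x}.
Proof.
move=> NN HQ; apply: (@negligibleS _ _ _ (@lebesgue_measure R) _ _ _ NN).
by move=> x /= nQ; apply: contrapT => Nx; apply: nQ; exact: HQ.
Qed.

Lemma ae_to (R : realType) (Q : R -> Prop) :
  {ae @lebesgue_measure R, forall x, Q x} ->
  (@lebesgue_measure R).-negligible [set x | ~ Q x].
Proof. by []. Qed.

Lemma H_eq (R : realType) (f : R -> R) :
  prob_density_Rplus f ->
  (\int[@lebesgue_measure R]_(x in `[0%R, +oo[) h0 f x)%E =
  (\int[@lebesgue_measure R]_(x in `[0%R, +oo[) (kf f x)%:E)%E.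
Proof.
move=> pd.
have J : (`[0%R, +oo[%classic : set R) `\ 0 = `]0%R, +oo[%classic.
  apply/seteqP; split => x /=; rewrite !in_itv/= !andbT.
    by move=> [x0 /eqP xn0]; rewrite lt_neqAle eq_sym xn0.
  by move=> x0; split; [exact: ltW| move=> /= x00; move: x0; rewrite x00 ltxx].
have mJ : measurable ((`[0%R, +oo[%classic : set R) `\ 0).
  by rewrite J; exact: measurable_itv.
have mk : measurable_fun ((`[0%R, +oo[%classic : set R) `\ 0) (fun x => (kf f x)%:E).
  by rewrite J; apply: measurableT_comp => //; exact: kf_meas_o.
rewrite -(@integral_setD1 _ _ 0)//; last first.
  apply: eq_measurable_fun mk => x; rewrite inE J/= in_itv/= andbT => x0.
  by rewrite h0_fin.
rewrite -[RHS](@integral_setD1 _ _ 0)//.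
apply: eq_integral => x; rewrite inE J/= in_itv/= andbT => x0.
by rewrite h0_fin.
Qed.

Lemma int_kf_le1 (R : realType) (f : R -> R) :
  prob_density_Rplus f ->
  (\int[@lebesgue_measure R]_(x in `[0%R, +oo[) (kf f x)%:E <= 1)%E.
Proof.
move=> pd; have [mf [f0 intf]] := pd; rewrite -intf.
apply: ae_ge0_le_integral => //.
- by move=> x _; rewrite lee_fin; exact: kf_ge0.
- by apply: measurableT_comp => //; exact: kf_meas.
- by move=> x; rewrite /= in_itv/= andbT => x0; rewrite lee_fin f0.
- exact: measurableT_comp.
apply: (ae_from (negligibleU (negl_set1 0) (kf_le_f pd))) => x nN.
rewrite /= in_itv/= andbT => x0; rewrite lee_fin leNgt; apply/negP => fk.
apply: nN; move: x0; rewrite le_eqVlt => /orP[/eqP x0|x0]; first by left.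
by right.
Qed.

Lemma dom_le_kf (R : realType) (f g : R -> R) p x :
  prob_density_Rplus f -> nonincr_density g -> dominated_ae f g p ->
  0 <= p -> 0 < x -> p * g x <= kf f x.
Proof.
move=> pd [_ gmono] dom p0 x0; apply: Pz_le_kf => //.
apply/negligibleP; first exact: Sset_meas pd.
have := negligibleU (negl_set1 0) (ae_to dom).
apply: negligibleS => y [/andP[y0 yx] fy].
move: y0; rewrite le_eqVlt => /orP[/eqP y0|y0]; first by left.
right => /(_ (ltW y0)); rewrite subr_ge0 => H.
have gy : g x <= g y by exact: gmono.
have := lt_le_trans fy (le_trans (ler_wpM2l p0 gy) H).
by rewrite ltxx.
Qed.

Lemma p_le_H (R : realType) (f g : R -> R) p :
  prob_density_Rplus f -> nonincr_density g -> dominated_ae f g p ->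
  0 <= p -> (p%:E <= \int[@lebesgue_measure R]_(x in `[0%R, +oo[) (kf f x)%:E)%E.
Proof.
move=> pd gd dom p0; have [[mg [g0 intg]] gmono] := gd.
have -> : p%:E = (\int[@lebesgue_measure R]_(x in `[0%R, +oo[) (p * g x)%:E)%E.
  under eq_integral => x _ do rewrite EFinM.
  rewrite ge0_integralZl_EFin//; first by rewrite intg mule1.
  - by move=> x; rewrite /= in_itv/= andbT => x0; rewrite lee_fin g0.
  - exact: measurableT_comp.
apply: ae_ge0_le_integral => //.
- by move=> x; rewrite /= in_itv/= andbT => x0; rewrite lee_fin mulr_ge0// g0.
- apply: measurableT_comp => //; apply: measurable_funM => //.
- by move=> x _; rewrite lee_fin; exact: kf_ge0.
- by apply: measurableT_comp => //; exact: kf_meas.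
apply: (ae_from (negl_set1 0)) => x nN.
rewrite /= in_itv/= andbT => x0; rewrite lee_fin.
apply: (dom_le_kf pd gd dom p0).
by rewrite lt_neqAle x0 andbT eq_sym; apply/eqP => x00; apply: nN.
Qed.

Lemma intJ (R : realType) (F : R -> \bar R) :
  measurable_fun (`]0%R, +oo[%classic : set R) F ->
  (\int[@lebesgue_measure R]_(x in `]0%R, +oo[) F x)%E =
  (\int[@lebesgue_measure R]_(x in `[0%R, +oo[) F x)%E.
Proof.
have J : (`[0%R, +oo[%classic : set R) `\ 0 = `]0%R, +oo[%classic.
  apply/seteqP; split => x /=; rewrite !in_itv/= !andbT.
    by move=> [x0 /eqP xn0]; rewrite lt_neqAle eq_sym xn0.
  by move=> x0; split; [exact: ltW| move=> /= x00; move: x0; rewrite x00 ltxx].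
move=> mF; rewrite -J (@integral_setD1 _ _ 0)//; first by rewrite J.
by rewrite J.
Qed.

Unset Implicit Arguments.
Set Strict Implicit.

Theorem mainTheorem4 (R : realType) (f : R -> R) :
  prob_density_Rplus f -> cadlag_Rplus f ->
  ((pi0 f)%:E = (\int[@lebesgue_measure R]_(x in `[0%R, +oo[) h0 f x)%E) /\
  (0 < pi0 f ->
     (nonincr_density (g0 f) /\ dominated_ae f (g0 f) (pi0 f)) /\
     (forall g : R -> R, nonincr_density g -> dominated_ae f g (pi0 f) ->
        {ae @lebesgue_measure R, forall x : R, 0 <= x -> g x = g0 f x})).
Proof.
move=> pd _.
have [mf [f0 intf]] := pd.
pose H := (\int[@lebesgue_measure R]_(x in `[0%R, +oo[) (kf f x)%:E)%E.
have H0 : (0 <= H)%E.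
  by apply: integral_ge0 => x _; rewrite lee_fin; exact: kf_ge0.
have H1 : (H <= 1)%E by exact: int_kf_le1.
have Hfin : H = (fine H)%:E.
  by rewrite fineK// ge0_fin_numE// (le_lt_trans H1)// ltry.
pose h := fine H.
have h0 : 0 <= h by exact: fine_ge0.
pose Sp := [set p | exists g, nonincr_density g /\ dominated_ae f g p].
have ub : ubound Sp h.
  move=> p [g [gd dom]]; have [p0|p0] := leP 0 p.
    by rewrite -lee_fin -/h -Hfin; exact: p_le_H gd dom p0.
  exact: le_trans (ltW p0) h0.
have pi_le : pi0 f <= h.
  have [ne|em] := pselect (Sp !=set0); first exact: ge_sup ne ub.
  rewrite /pi0 -/Sp (_ : Sp = set0) ?sup0//.
  by apply/seteqP; split => // p Sp_p; apply: em; exists p.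
have pi_ge0 : 0 <= pi0 f.
  have [[p [g [gd dom]]]|em] := pselect (Sp !=set0); last first.
    rewrite /pi0 -/Sp (_ : Sp = set0) ?sup0//.
    by apply/seteqP; split => // p Sp_p; apply: em; exists p.
  apply: (@ub_le_sup _ Sp); first by exists h.
  exists g; split => //; apply: aeW => x x0; rewrite mul0r subr0; exact: f0.
have gstar : 0 < h -> nonincr_density (fun x => kf f x / h) /\
    dominated_ae f (fun x => kf f x / h) h.
  move=> hpos; split; first split; first split.
  - by apply: measurable_funM => //; exact: kf_meas.
  - split.
      by move=> x x0; apply: divr_ge0 (ltW hpos); exact: kf_ge0.
    under eq_integral => x _ do rewrite mulrC EFinM.
    rewrite ge0_integralZl_EFin//.
    + by rewrite -/H Hfin -EFinM mulVf// gt_eqF.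
    + by move=> x _; rewrite lee_fin; exact: kf_ge0.
    + by apply: measurableT_comp => //; exact: kf_meas.
    + by rewrite invr_ge0.
  - move=> x y x0 xy; rewrite ler_pM2r ?invr_gt0//; exact: kf_mono.
  apply: (ae_from (negligibleU (negl_set1 0) (kf_le_f pd))) => x nN x0.
  rewrite [h * _]mulrC divfK ?gt_eqF// subr_ge0 leNgt; apply/negP => fk.
  apply: nN; move: x0; rewrite le_eqVlt => /orP[/eqP x0|x0]; first by left.
  by right.
have pi_eq : pi0 f = h.
  have [hpos|] := ltP 0 h; last first.
    by move=> h0'; apply/le_anti; rewrite pi_le (le_trans h0' pi_ge0).
  apply/le_anti; rewrite pi_le/=.
  apply: (@ub_le_sup _ Sp); first by exists h.
  by exists (fun x => kf f x / h); exact: gstar.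
split; first by rewrite H_eq// pi_eq -Hfin.
move=> pipos; have hpos : 0 < h by rewrite -pi_eq.
have g0E : g0 f = (fun x => kf f x / h).
  by apply/funext => x; rewrite /g0 pi_eq.
rewrite g0E pi_eq; split; first exact: gstar hpos.
move=> g gd dom.
have [[mg [g0' intg]] gmono] := gd.
pose d := fun x => kf f x - h * g x.
have dge0 x : 0 < x -> 0 <= d x.
  by move=> x0; rewrite subr_ge0; exact: dom_le_kf pd gd dom (ltW hpos) x0.
have mJ : measurable (`]0%R, +oo[%classic : set R) by [].
have JI : (`]0%R, +oo[%classic : set R) `<=` `[0%R, +oo[%classic.
  by move=> x; rewrite /= !in_itv/= !andbT; exact: ltW.
have mkJ : measurable_fun (`]0%R, +oo[%classic : set R) (kf f).
  exact: kf_meas_o.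
have mgJ : measurable_fun (`]0%R, +oo[%classic : set R) g.
  exact: (measurable_funS _ JI mg).
have mhgJ : measurable_fun (`]0%R, +oo[%classic : set R) (fun x => (h * g x)%:E).
  by apply: measurableT_comp => //; apply: measurable_funM.
have mdJ : measurable_fun (`]0%R, +oo[%classic : set R) (fun x => (d x)%:E).
  by apply: measurableT_comp => //; apply: measurable_funB => //; apply: measurable_funM.
have intkJ : (\int[@lebesgue_measure R]_(x in `]0%R, +oo[) (kf f x)%:E)%E = H.
  by rewrite intJ//; apply: measurableT_comp.
have inthg : (\int[@lebesgue_measure R]_(x in `]0%R, +oo[) (h * g x)%:E)%E = h%:E.
  rewrite intJ//; under eq_integral => x _ do rewrite EFinM.
  rewrite ge0_integralZl_EFin//; first by rewrite intg mule1.
  - by move=> x; rewrite /= in_itv/= andbT => x0; rewrite lee_fin g0'.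
  - exact: measurableT_comp.
have hsplit : (\int[@lebesgue_measure R]_(x in `]0%R, +oo[) (kf f x)%:E)%E =
   (\int[@lebesgue_measure R]_(x in `]0%R, +oo[) (h * g x)%:E +
    \int[@lebesgue_measure R]_(x in `]0%R, +oo[) (d x)%:E)%E.
  rewrite -ge0_integralD//.
  - by apply: eq_integral => x _; rewrite -EFinD /d addrC subrK.
  - move=> x; rewrite /= in_itv/= andbT => x0.
    by rewrite lee_fin mulr_ge0 ?(ltW hpos)// g0' ?ltW.
  - by move=> x; rewrite /= in_itv/= andbT => x0; rewrite lee_fin dge0.
have intd0 : (\int[@lebesgue_measure R]_(x in `]0%R, +oo[) (d x)%:E)%E = 0%E.
  move: hsplit; rewrite intkJ inthg Hfin -/h => e.
  have := congr1 (fun y => (y - h%:E)%E) e.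
  by rewrite /= subee// (addeC h%:E) addeK.
have aed := (ae_eq_integral_abs (@lebesgue_measure R) mJ mdJ).1.
have {aed} aed : ae_eq (@lebesgue_measure R) (`]0%R, +oo[%classic : set R)
    (fun x => (d x)%:E) (cst 0%E).
  apply: aed; rewrite -intd0; apply: eq_integral => x.
  by rewrite inE/= in_itv/= andbT => x0; rewrite ger0_norm// dge0.
apply: (ae_from (negligibleU (negl_set1 0) (ae_to aed))) => x nN x0.
have xpos : 0 < x.
  by rewrite lt_neqAle x0 andbT eq_sym; apply/eqP => x00; apply: nN; left.
have dx : (d x)%:E = 0%E.
  apply: contrapT => ne; apply: nN; right => /= /(_ _).
  by rewrite in_itv/= andbT xpos => /(_ isT).
move: dx => [] /eqP; rewrite subr_eq0 => /eqP ->.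
by rewrite mulrAC mulfV ?gt_eqF// mul1r.
Qed.
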